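(* Let $K$ be a field and $R$ a von Neumann regular, right self-injective $K$-algebra possessing a bounded basis. Then $R$ is completely reducible (semisimple).
   Context: Let $B$ be a $K$-linear basis of a $K$-algebra $R$. For $r\in R$ write $r=\sum_{b\in B}bk_b$, $\mathrm{supp}(r)=\{b\mid k_b\neq0\}$, $\mathrm{cs}(r)=|\mathrm{supp}(r)|$. $B$ is $k$-bounded ($1\le k<\omega$) if $\mathrm{cs}(bb')\le k$ for all $b,b'\in B$, and $B$ is bounded if it is $k$-bounded for some $1\le k<\omega$. *)

(* Defs.v *)
From HB Require Import structures.
From mathcomp Require Import all_boot all_order all_algebra.
Set Implicit Arguments. Unset Strict Implicit. Unset Printing Implicit Defensive.
Import GRing.Theory.
Local Open Scope ring_scope.

Section Defs.
Variables (K : fieldType) (R : algType K).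

Definition lin_indep (B : R -> Prop) : Prop :=
  forall (s : seq R) (c : R -> K), uniq s -> (forall b, b \in s -> B b) ->
    \sum_(b <- s) c b *: b = 0 -> forall b, b \in s -> c b = 0.

Definition spanning (B : R -> Prop) : Prop :=
  forall r : R, exists (s : seq R) (c : R -> K),
    (forall b, b \in s -> B b) /\ r = \sum_(b <- s) c b *: b.

Definition is_basis (B : R -> Prop) : Prop := lin_indep B /\ spanning B.

(* [supp_of B r s]: s (duplicate-free) enumerates supp(r) w.r.t. B, i.e.
   r = sum_{b in s} b k_b with all k_b <> 0. By linear independence, such s is
   unique up to permutation, and cs(r) = size s. *)
Definition supp_of (B : R -> Prop) (r : R) (s : seq R) : Prop :=
  uniq s /\ (forall b, b \in s -> B b) /\
  exists c : R -> K, (forall b, b \in s -> c b != 0) /\ r = \sum_(b <- s) c b *: b.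

Definition cs_le (B : R -> Prop) (r : R) (k : nat) : Prop :=
  forall s, supp_of B r s -> (size s <= k)%N.

Definition k_bounded (B : R -> Prop) (k : nat) : Prop :=
  (1 <= k)%N /\ forall b b', B b -> B b' -> cs_le B (b * b') k.

Definition bounded_basis (B : R -> Prop) : Prop :=
  is_basis B /\ exists k : nat, k_bounded B k.

End Defs.

Section Ring.
Variable R : nzRingType.

Definition vN_regular : Prop := forall a : R, exists x : R, a * x * a = a.

(* Right R-modules are left modules over the opposite ring R^c; the right
   regular module R_R is (R^c)^o, where  a *: x = x * a. *)
Definition right_self_injective : Prop :=
  forall (M N : lmodType R^c) (f : {linear M -> N}), injective f ->
  forall g : {linear M -> (R^c)^o},
  exists h : {linear N -> (R^c)^o}, forall m, h (f m) = g m.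

Definition right_ideal (I : R -> Prop) : Prop :=
  I 0 /\ (forall x y, I x -> I y -> I (x - y)) /\
  (forall x r, I x -> I (x * r)).

Definition completely_reducible : Prop :=
  forall I, right_ideal I -> exists J, right_ideal J /\
    (forall x, I x -> J x -> x = 0) /\
    (forall r, exists i j, I i /\ J j /\ r = i + j).
End Ring.

(* Main.v *)
Require Import Defs.
From HB Require Import structures.
From mathcomp Require Import all_boot all_order all_algebra.
From mathcomp Require Import zify.
From mathcomp Require classical_sets.
From Stdlib Require Import ClassicalEpsilon Classical.
Set Implicit Arguments. Unset Strict Implicit. Unset Printing Implicit Defensive.
Import GRing.Theory.
Local Open Scope ring_scope.

Section Ext.
Variables (R : nzRingType) (Phi : R -> R -> Prop).
Hypothesis Phi0 : Phi 0 0.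
Hypothesis Phifun : forall x z z', Phi x z -> Phi x z' -> z = z'.
Hypothesis PhiB : forall x y z w, Phi x z -> Phi y w -> Phi (x - y) (z - w).
Hypothesis PhiM : forall x z r, Phi x z -> Phi (x * r) (z * r).

Definition ExtT := (R^c)^o.
Definition domb (x : ExtT) : bool :=
  if excluded_middle_informative (exists z, Phi x z) then true else false.

Lemma dombP x : reflect (exists z, Phi x z) (domb x).
Proof. rewrite /domb; case: excluded_middle_informative => h; constructor => //. Qed.

Lemma PhiD x y z w : Phi x z -> Phi y w -> Phi (x + y) (z + w).
Proof.
move=> hx hy; have h0 := PhiB Phi0 hy; rewrite !sub0r in h0.
by have := PhiB hx h0; rewrite !opprK.
Qed.

Lemma domb_closed : submod_closed domb.
Proof.
split; first by apply/dombP; exists 0.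
move=> a u v /dombP[z hz] /dombP[w hw]; apply/dombP.
exists (z * a + w); exact: PhiD (PhiM a hz) hw.
Qed.

HB.instance Definition _ := GRing.isSubmodClosed.Build R^c ExtT domb domb_closed.

Inductive extsub : predArgType := ExtSub u & domb u.
Definition extval w : ExtT := let: ExtSub u _ := w in u.
HB.instance Definition _ := [isSub of extsub for extval].
HB.instance Definition _ := [Choice of extsub by <:].
HB.instance Definition _ := [SubChoice_isSubZmodule of extsub by <:].
HB.instance Definition _ := [SubZmodule_isSubLmodule of extsub by <:].

Lemma extval_is_linear : linear extval. Proof. by []. Qed.
HB.instance Definition _ := GRing.isLinear.Build R^c extsub ExtT _ extval extval_is_linear.

Definition phi (x : R) : R :=
  match excluded_middle_informative (exists z, Phi x z) with
  | left h => proj1_sig (constructive_indefinite_description _ h)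
  | right _ => 0 end.

Lemma phiP x z : Phi x z -> phi x = z.
Proof.
move=> h; rewrite /phi; case: excluded_middle_informative => [h'|[]]; last by exists z.
by case: constructive_indefinite_description => /= z' hz'; apply: Phifun hz' h.
Qed.

Lemma phiD x : domb x -> Phi x (phi x).
Proof. by move/dombP=> [z hz]; rewrite (phiP hz). Qed.

Definition gfun (m : extsub) : ExtT := phi (extval m).

Lemma gfun_is_linear : linear gfun.
Proof.
move=> a u v; rewrite /gfun.
have hu := phiD (valP u); have hv := phiD (valP v).
apply: phiP => /=.
exact: PhiD (PhiM a hu) hv.
Qed.
HB.instance Definition _ := GRing.isLinear.Build R^c extsub ExtT _ gfun gfun_is_linear.

Lemma extend_lemma : right_self_injective R -> exists y : R, forall x z, Phi x z -> z = y * x.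
Proof.
move=> inj.
have [h hh] := inj _ _ extval (@val_inj _ _ extsub) gfun.
exists (h 1) => x z hxz.
have dx : domb x by apply/dombP; exists z.
have E := hh (ExtSub dx).
have -> : z = h x by rewrite -(phiP hxz); exact: (esym E).
have L := linearZZ h x (1 : ExtT).
set a := (X in h X = _) in L.
have ea : a = x by rewrite /a /GRing.scale /= mulr1.
by rewrite ea in L; rewrite L.
Qed.
End Ext.

Section Basis.
Variables (K : fieldType) (R : algType K) (B : R -> Prop).
Hypothesis hB : is_basis B.

Definition coef (t : seq (K * R)) (b : R) : K := \sum_(p <- t | p.2 == b) p.1.
Definition tsum (t : seq (K * R)) : R := \sum_(p <- t) p.1 *: p.2.
Definition inB (t : seq (K * R)) := forall p, p \in t -> B p.2.

Lemma coef_cons p t b : coef (p :: t) b = (if p.2 == b then p.1 else 0) + coef t b.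
Proof. by rewrite /coef big_cons; case: ifP; rewrite ?add0r. Qed.

Lemma coef_notin t b : b \notin map snd t -> coef t b = 0.
Proof.
move=> nb; rewrite /coef big_seq_cond big1 // => p /andP[pt /eqP pb].
by case/negP: nb; rewrite -pb; apply: map_f.
Qed.

Lemma sum_single (U : seq R) (b : R) (a : K) : uniq U -> b \in U ->
  \sum_(u <- U) (if b == u then a else 0) *: u = a *: b.
Proof.
move=> uU bU; rewrite (bigD1_seq b bU uU) /= eqxx big1 ?addr0 // => u.
by rewrite eq_sym => /negbTE ->; rewrite scale0r.
Qed.

Lemma sum_coef U t : uniq U -> {subset map snd t <= U} ->
  \sum_(u <- U) coef t u *: u = tsum t.
Proof.
move=> uU; elim: t => [|p t IH] sub.
  by rewrite /tsum big_nil big1 // => u _; rewrite /coef big_nil scale0r.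
rewrite /tsum big_cons -/(tsum t) -IH; last first.
  by move=> x hx; apply: sub; rewrite /= inE hx orbT.
have pU : p.2 \in U by apply: sub; rewrite /= inE eqxx.
rewrite -(sum_single p.1 uU pU) -big_split /=.
by apply: eq_bigr => u _; rewrite coef_cons scalerDl.
Qed.

Lemma tsum_cat t1 t2 : tsum (t1 ++ t2) = tsum t1 + tsum t2.
Proof. by rewrite /tsum big_cat. Qed.
Lemma coef_cat t1 t2 b : coef (t1 ++ t2) b = coef t1 b + coef t2 b.
Proof. by rewrite /coef big_cat. Qed.
Lemma inB_cat t1 t2 : inB t1 -> inB t2 -> inB (t1 ++ t2).
Proof. by move=> h1 h2 p; rewrite mem_cat => /orP[/h1|/h2]. Qed.

Definition tscale (c : K) (t : seq (K * R)) : seq (K * R) := [seq (c * p.1, p.2) | p <- t].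
Lemma tsum_scale c t : tsum (tscale c t) = c *: tsum t.
Proof. by rewrite /tsum big_map scaler_sumr; apply: eq_bigr => p _; rewrite scalerA. Qed.
Lemma coef_scale c t b : coef (tscale c t) b = c * coef t b.
Proof. by rewrite /coef big_map mulr_sumr. Qed.
Lemma inB_scale c t : inB t -> inB (tscale c t).
Proof. by move=> h p /mapP[q qt ->]; exact: h q qt. Qed.

Lemma coef_unique t1 t2 : inB t1 -> inB t2 -> tsum t1 = tsum t2 ->
  forall b, coef t1 b = coef t2 b.
Proof.
move=> h1 h2 e b.
set U := undup (map snd (t1 ++ t2)).
have uU : uniq U := undup_uniq _.
have s1 : {subset map snd t1 <= U} by move=> x hx; rewrite mem_undup map_cat mem_cat hx.
have s2 : {subset map snd t2 <= U} by move=> x hx; rewrite mem_undup map_cat mem_cat hx orbT.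
have UB : forall u, u \in U -> B u.
  move=> u; rewrite mem_undup => /mapP[p pt ->]; exact: (inB_cat h1 h2).
have hsum : \sum_(u <- U) (coef t1 u - coef t2 u) *: u = 0.
  under eq_bigr do rewrite scalerBl.
  by rewrite sumrB (sum_coef uU s1) (sum_coef uU s2) e subrr.
have := hB.1 U (fun u => coef t1 u - coef t2 u) uU UB hsum b.
case: (boolP (b \in U)) => bU; first by move=> /(_ isT) /eqP; rewrite subr_eq0 => /eqP.
move=> _; rewrite !coef_notin //; apply: contra bU; [exact: s2 | exact: s1].
Qed.

Lemma rep_ex r : exists t, inB t /\ r = tsum t.
Proof.
have [s [c [sB ->]]] := hB.2 r.
exists [seq (c b, b) | b <- s]; split; last by rewrite /tsum big_map.
by move=> p /mapP[b bs ->]; apply: sB.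
Qed.

Definition rep r := proj1_sig (constructive_indefinite_description _ (rep_ex r)).
Lemma repP r : inB (rep r) /\ r = tsum (rep r).
Proof. by rewrite /rep; case: constructive_indefinite_description. Qed.

Definition coord r b := coef (rep r) b.
Lemma coordE t r : inB t -> r = tsum t -> forall b, coord r b = coef t b.
Proof.
move=> ht e b; have [h1 e1] := repP r; apply: coef_unique => //; by rewrite -e1.
Qed.

Lemma coordD x y b : coord (x + y) b = coord x b + coord y b.
Proof.
have [h1 e1] := repP x; have [h2 e2] := repP y.
rewrite (@coordE (rep x ++ rep y)) ?coef_cat //; first exact: inB_cat.
by rewrite tsum_cat -e1 -e2.
Qed.

Lemma coordZ c x b : coord (c *: x) b = c * coord x b.
Proof.
have [h1 e1] := repP x.
rewrite (@coordE (tscale c (rep x))) ?coef_scale //; first exact: inB_scale.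
by rewrite tsum_scale -e1.
Qed.

Lemma coordN x b : coord (- x) b = - coord x b.
Proof. by rewrite -scaleN1r coordZ mulN1r. Qed.

Lemma coordB x y b : coord (x - y) b = coord x b - coord y b.
Proof. by rewrite coordD coordN. Qed.

Definition supp r := filter (fun b => coord r b != 0) (undup (map snd (rep r))).
Definition cs r := size (supp r).

Lemma supp_uniq r : uniq (supp r).
Proof. exact/filter_uniq/undup_uniq. Qed.

Lemma mem_supp r b : (b \in supp r) = (coord r b != 0).
Proof.
rewrite mem_filter; case: (boolP (coord r b != 0)) => //= nz.
rewrite mem_undup; case: (boolP (b \in map snd (rep r))) => // nb; by move: nz; rewrite /coord coef_notin // eqxx.
Qed.

Lemma suppB r b : b \in supp r -> B b.
Proof.
rewrite mem_filter mem_undup => /andP[_ /mapP[p pt ->]]; exact: (repP r).1.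
Qed.

Lemma supp_rep r : r = \sum_(b <- supp r) coord r b *: b.
Proof.
have [h1 e1] := repP r.
rewrite {1}e1 -(@sum_coef (undup (map snd (rep r)))) ?undup_uniq //; last first.
  by move=> x; rewrite mem_undup.
rewrite /supp big_filter [in RHS]big_mkcond; apply: eq_bigr => u _.
by case: ifP => // /negbFE/eqP; rewrite /coord => ->; rewrite scale0r.
Qed.

Lemma coord_nz u : u != 0 -> exists q, coord u q != 0.
Proof.
move=> nz; case e: (supp u) => [|q s].
  by move: nz; rewrite {1}(supp_rep u) e big_nil eqxx.
by exists q; rewrite -mem_supp e inE eqxx.
Qed.

Definition Sp n x := exists t, [/\ inB t, (size t <= n)%N & x = tsum t].

Lemma Sp_cs n x : Sp n x -> (cs x <= n)%N.
Proof.
move=> [t [ht st e]]; apply: leq_trans st; rewrite -(size_map snd).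
apply: uniq_leq_size; first exact: supp_uniq.
move=> b; rewrite mem_supp (coordE ht e); case: (boolP (b \in map snd t)) => // nb.
by rewrite coef_notin // eqxx.
Qed.

Lemma cs_Sp x : Sp (cs x) x.
Proof.
exists [seq (coord x b, b) | b <- supp x]; split; rewrite ?size_map //.
  by move=> p /mapP[b bs ->]; exact: suppB bs.
by rewrite /tsum big_map -supp_rep.
Qed.

Lemma SpW n m x : (n <= m)%N -> Sp n x -> Sp m x.
Proof. by move=> nm [t [h s e]]; exists t; split => //; apply: leq_trans nm. Qed.

Lemma Sp0 : Sp 0 0.
Proof. by exists [::]; split => //; rewrite /tsum big_nil. Qed.

Lemma SpD n m x y : Sp n x -> Sp m y -> Sp (n + m) (x + y).
Proof.
move=> [t1 [h1 s1 e1]] [t2 [h2 s2 e2]]; exists (t1 ++ t2); split.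
- exact: inB_cat.
- by rewrite size_cat leq_add.
- by rewrite tsum_cat e1 e2.
Qed.

Lemma SpZ n c x : Sp n x -> Sp n (c *: x).
Proof.
move=> [t [h s e]]; exists (tscale c t); split.
- exact: inB_scale.
- by rewrite size_map.
- by rewrite tsum_scale e.
Qed.

Lemma Sp_sum (I : eqType) (s : seq I) (F : I -> R) n :
  (forall i, i \in s -> Sp n (F i)) -> Sp (size s * n) (\sum_(i <- s) F i).
Proof.
elim: s => [|i s IH] h; first by rewrite big_nil; exact: Sp0.
rewrite big_cons mulSn; apply: SpD; first by apply: h; rewrite inE eqxx.
by apply: IH => j js; apply: h; rewrite inE js orbT.
Qed.

Variable k : nat.
Hypothesis hk : k_bounded B k.

Lemma cs_bmul b b' : B b -> B b' -> (cs (b * b') <= k)%N.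
Proof.
move=> hb hb'; apply: hk.2 hb hb' _ _; split; first exact: supp_uniq.
split; first by move=> u; apply: suppB.
exists (coord (b * b')); split; last exact: supp_rep.
by move=> u; rewrite mem_supp.
Qed.

Lemma cs_mul x y : (cs (x * y) <= cs x * (cs y * k))%N.
Proof.
apply: Sp_cs.
have -> : x * y = \sum_(i <- supp x) \sum_(b <- supp y) (coord x i * coord y b) *: (i * b).
  rewrite [in LHS](supp_rep x) [in LHS](supp_rep y) mulr_suml.
  apply: eq_bigr => i _; rewrite mulr_sumr; apply: eq_bigr => b _.
  by rewrite -scalerAl -scalerAr scalerA.
apply: Sp_sum => i iin; apply: Sp_sum => b bin; apply: SpZ.
apply: (SpW _ (cs_Sp _)); exact: (cs_bmul (suppB iin) (suppB bin)).
Qed.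

Fixpoint inspan (vs : seq R) (z : R) : Prop :=
  if vs is v :: vs' then exists a z', inspan vs' z' /\ z = a *: v + z' else z = 0.
Fixpoint indep (vs : seq R) : Prop :=
  if vs is v :: vs' then ~ inspan vs' v /\ indep vs' else True.

Lemma inspan0 vs : inspan vs 0.
Proof. elim: vs => [|v vs IH] //=; exists 0, 0; by rewrite scale0r addr0. Qed.

Lemma inspanD vs x y : inspan vs x -> inspan vs y -> inspan vs (x + y).
Proof.
elim: vs x y => [|v vs IH] x y /=; first by move=> -> ->; rewrite addr0.
move=> [a [x' [hx ->]]] [b [y' [hy ->]]]; exists (a + b), (x' + y'); split; first exact: IH.
by rewrite scalerDl addrACA.
Qed.

Lemma inspanZ vs c x : inspan vs x -> inspan vs (c *: x).
Proof.
elim: vs x => [|v vs IH] x /=; first by move=> ->; rewrite scaler0.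
move=> [a [x' [hx ->]]]; exists (c * a), (c *: x'); split; first exact: IH.
by rewrite scalerDr scalerA.
Qed.

Lemma inspanB vs x y : inspan vs x -> inspan vs y -> inspan vs (x - y).
Proof. by move=> hx hy; apply: inspanD => //; rewrite -scaleN1r; apply: inspanZ. Qed.

Lemma inspan_mul0 vs z w : inspan vs z -> (forall v, v \in vs -> v * w = 0) -> z * w = 0.
Proof.
elim: vs z => [|v vs IH] z /=; first by move=> ->; rewrite mul0r.
move=> [a [z' [hz ->]]] h; rewrite mulrDl -scalerAl (h v) ?inE ?eqxx // scaler0 add0r.
by apply: IH => // u uin; apply: h; rewrite inE uin orbT.
Qed.

Lemma inspan_fix vs z w : inspan vs z -> (forall v, v \in vs -> v * w = v) -> z * w = z.
Proof.
elim: vs z => [|v vs IH] z /=; first by move=> ->; rewrite mul0r.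
move=> [a [z' [hz ->]]] h; rewrite mulrDl -scalerAl (h v) ?inE ?eqxx //.
by rewrite (IH z') // => u uin; apply: h; rewrite inE uin orbT.
Qed.

Lemma ech vs : indep vs -> exists ps : seq R, [/\ uniq ps, size ps = size vs &
  forall tau : R -> K, exists z, inspan vs z /\ forall p, p \in ps -> coord z p = tau p].
Proof.
elim: vs => [|v vs IH] /=.
  move=> _; exists [::]; split => // tau; exists 0; split => //.
move=> [nv /IH [ps [ups sps surj]]].
have [z0 [hz0 ez0]] := surj (coord v).
set u := v - z0.
have unz : u != 0.
  apply/eqP => /eqP; rewrite subr_eq0 => /eqP e; apply: nv; by rewrite e.
have [q hq] := coord_nz unz.
have up : forall p, p \in ps -> coord u p = 0.
  by move=> p pin; rewrite coordB ez0 // subrr.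
have qps : q \notin ps by apply/negP => /up; apply/eqP.
exists (q :: ps); split; first by rewrite /= qps.
  by rewrite /= sps.
move=> tau; have [z1 [hz1 ez1]] := surj tau.
set l := (tau q - coord z1 q) / coord u q.
exists (l *: u + z1); split.
  exists l, (z1 - l *: z0); split; first by apply: inspanB => //; apply: inspanZ.
  by rewrite /u scalerBr [z1 - _]addrC addrA.
move=> p; rewrite inE => /orP[/eqP ->|pin].
  by rewrite coordD coordZ /l divfK // addrNK.
by rewrite coordD coordZ up // mulr0 add0r ez1.
Qed.

Lemma big_cs vs : indep vs -> exists z, inspan vs z /\ (size vs <= cs z)%N.
Proof.
move=> /ech [ps [ups sps surj]]; have [z [hz ez]] := surj (fun _ => 1).
exists z; split => //; rewrite -sps; apply: uniq_leq_size => // p pin.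
by rewrite mem_supp ez // oner_neq0.
Qed.

End Basis.

Section Orth.
Variable R : nzRingType.
Hypothesis vN : vN_regular R.

Lemma ri_add (I : R -> Prop) x y : right_ideal I -> I x -> I y -> I (x + y).
Proof.
move=> [I0 [IB IM]] hx hy; have := IB _ _ hx (IB _ _ I0 hy).
by rewrite sub0r opprK.
Qed.

Lemma step (I : R -> Prop) : right_ideal I ->
  ~ (exists J, right_ideal J /\ (forall x, I x -> J x -> x = 0) /\
      (forall r, exists i j, I i /\ J j /\ r = i + j)) ->
  forall E, exists H, (E * E = E /\ I E) ->
    [/\ H * H = H, H != 0, E * H = 0, H * E = 0 & I H].
Proof.
move=> hI nJ E; have [I0 [IB IM]] := hI.
case: (classic (E * E = E /\ I E)); last first.
  by move=> h; exists 0 => /h.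
move=> [EE IE].
have [x [Ix Ex]] : exists x, I x /\ E * x != x.
  apply: NNPP => nx; apply: nJ; exists (fun x => E * x = 0); split.
    split; first by rewrite mulr0.
    split; first by move=> x y hx hy; rewrite mulrBr hx hy subrr.
    by move=> x r hx; rewrite mulrA hx mul0r.
  split.
    move=> x hx hJ; apply: NNPP => nz; apply: nx; exists x; split => //.
    by rewrite hJ eq_sym; apply/eqP.
  move=> r; exists (E * r), (r - E * r); split; first exact: IM.
  by split; [rewrite mulrBr mulrA EE subrr | rewrite addrC subrK].
set x' := x - E * x.
have Ix' : I x' by apply: IB => //; apply: IM.
have x'nz : x' != 0 by rewrite subr_eq0 eq_sym.
have Ex' : E * x' = 0 by rewrite mulrBr mulrA EE subrr.
have [u hu] := vN x'.
set H0 := x' * u.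
have H0H0 : H0 * H0 = H0 by rewrite /H0 mulrA hu.
have H0x : H0 * x' = x' by rewrite /H0 hu.
have EH0 : E * H0 = 0 by rewrite /H0 mulrA Ex' mul0r.
have H0nz : H0 != 0 by apply: contraNneq x'nz => e; rewrite -H0x e mul0r.
have IH0 : I H0 by apply: IM.
clearbody H0.
exists (H0 - H0 * E) => _; split.
- rewrite mulrBl !mulrBr !mulrA H0H0 -[H0 * E * H0]mulrA EH0 mulr0 mul0r.
  by rewrite subrr subr0.
- apply: contraNneq H0nz => e.
  have : (H0 - H0 * E) * H0 = H0 by rewrite mulrBl H0H0 -mulrA EH0 mulr0 subr0.
  by rewrite e mul0r => <-.
- by rewrite mulrBr EH0 mulrA EH0 mul0r subrr.
- by rewrite mulrBl -mulrA EE subrr.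
- by apply: IB => //; apply: IM.
Qed.

Lemma orth_seq : ~ completely_reducible R ->
  exists h : nat -> R, (forall n, h n * h n = h n /\ h n != 0) /\
    (forall n m, n != m -> h n * h m = 0).
Proof.
move=> ncr.
have [I [hI nJ]] : exists I : R -> Prop, right_ideal I /\ ~ (exists J, right_ideal J /\
   (forall x, I x -> J x -> x = 0) /\ (forall r, exists i j, I i /\ J j /\ r = i + j)).
  case: (classic (exists I : R -> Prop, right_ideal I /\ ~ (exists J, right_ideal J /\
   (forall x, I x -> J x -> x = 0) /\ (forall r, exists i j, I i /\ J j /\ r = i + j)))) => // nn.
  exfalso; apply: ncr => I hI; apply: NNPP => nJ; apply: nn; by exists I.
have st := step hI nJ.
pose fH E := proj1_sig (constructive_indefinite_description _ (st E)).
have fHP E : E * E = E /\ I E ->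
    [/\ fH E * fH E = fH E, fH E != 0, E * fH E = 0, fH E * E = 0 & I (fH E)].
  by rewrite /fH; case: constructive_indefinite_description.
pose Ef := fix Ef n := if n is n'.+1 then Ef n' + fH (Ef n') else 0.
have Einv : forall n, Ef n * Ef n = Ef n /\ I (Ef n).
  elim => [|n [EE IE]] /=; first by rewrite mulr0; split => //; case: hI.
  have [HH _ EH HE IH] := fHP _ (conj EE IE).
  split; last exact: ri_add.
  by rewrite mulrDl !mulrDr EE EH HE HH addr0 add0r.
pose h n := fH (Ef n).
have hP n := fHP _ (Einv n).
have Eh : forall n m, (n < m)%N -> Ef m * h n = h n /\ h n * Ef m = h n.
  move=> n; elim => [|m IH] //; rewrite ltnS leq_eqVlt => /orP[/eqP <-|lt] /=.
    have [HH _ EH HE _] := hP n; rewrite /h.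
    by rewrite mulrDl mulrDr EH HE HH add0r.
  have [e1 e2] := IH lt; have [HH _ EH HE _] := hP m.
  rewrite mulrDl mulrDr e1 e2 -/(h m).
  have -> : h m * h n = 0 by rewrite -e1 mulrA [h m * _]HE mul0r.
  have -> : h n * h m = 0 by rewrite -e2 -mulrA [Ef m * _]EH mulr0.
  by rewrite !addr0.
exists h; split.
  by move=> n; have [HH nz _ _ _] := hP n.
move=> n m; rewrite neq_ltn => /orP[] lt.
  have [_ e2] := Eh _ _ lt; have [_ _ EH _ _] := hP m.
  by rewrite -e2 -mulrA [Ef m * _]EH mulr0.
have [e1 _] := Eh _ _ lt; have [_ _ _ HE _] := hP n.
by rewrite -e1 mulrA [h n * _]HE mul0r.
Qed.
End Orth.

Section Main.
Variables (K : fieldType) (R : algType K).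
Hypothesis vN : vN_regular R.
Hypothesis inj : right_self_injective R.
Variables (B : R -> Prop) (hB : is_basis B) (k : nat) (hk : k_bounded B k).
Variable h : nat -> R.
Hypothesis hid : forall n, h n * h n = h n /\ h n != 0.
Hypothesis horth : forall n m, n != m -> h n * h m = 0.

Lemma hh j l : h j * h l = if j == l then h j else 0.
Proof. by case: eqP => [->|/eqP ne]; [exact: (hid l).1 | exact: horth]. Qed.

Fixpoint sumF (f : nat -> R) N := if N is N'.+1 then sumF f N' + f N' else 0.

Lemma sumF_mul1 f g c : (forall i l, f i * g l = if i == l then c i else 0) ->
  forall M l, sumF f M * g l = if (l < M)%N then c l else 0.
Proof.
move=> fg; elim => [|M IH] l /=; first by rewrite mul0r.
rewrite mulrDl IH fg ltnS.
case: (ltngtP l M) => [lt|gt|->]; rewrite ?eqxx ?ltnn /= ?add0r //.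
- by rewrite addr0.
Qed.

Lemma sumF_mul f g c : (forall i l, f i * g l = if i == l then c i else 0) ->
  forall N M, (N <= M)%N -> sumF f M * sumF g N = sumF c N.
Proof.
move=> fg; elim => [|N IH] M NM /=; first by rewrite mulr0.
by rewrite mulrDr IH ?(ltnW NM) // (sumF_mul1 fg) NM.
Qed.

Lemma sumF_if (b : bool) f N : sumF (fun j => if b then f j else 0) N = if b then sumF f N else 0.
Proof. by case: b => //; elim: N => //= N ->; rewrite addr0. Qed.

Definition col (j : nat) : nat := if @unpickle (prod nat nat) j is Some p then p.1 else 0%N.
Definition idx (i l : nat) : nat := pickle (i, l).
Lemma col_idx i l : col (idx i l) = i.
Proof. by rewrite /col /idx pickleK. Qed.

Definition Es := sumF h.
Definition fi i j := if col j == i then h j else 0.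
Definition Ps i := sumF (fi i).

Lemma fi_h i j l : fi i j * h l = if j == l then fi i j else 0.
Proof. by rewrite /fi; case: ifP; rewrite ?mul0r ?hh //; case: ifP. Qed.
Lemma h_fi i j l : h j * fi i l = if j == l then fi i j else 0.
Proof.
rewrite /fi; case: (eqVneq j l) => [->|ne]; first by case: ifP; rewrite ?mulr0 ?hh ?eqxx.
by case: ifP; rewrite ?mulr0 // horth.
Qed.
Lemma fi_fi l i j j' : fi l j * fi i j' = if j == j' then (if l == i then fi i j else 0) else 0.
Proof.
rewrite /fi; case: (eqVneq j j') => [<-|ne].
  case: (eqVneq l i) => [->|ne]; first by case: ifP; rewrite ?mulr0 // (hid j).1.
  case: ifP => [/eqP cl|_]; last by rewrite mul0r.
  by rewrite cl (negbTE ne) mulr0.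
case: ifP; case: ifP; rewrite ?mulr0 ?mul0r //; by rewrite horth.
Qed.

Definition D x := exists N, Es N * x = x.

Lemma D_up N M x : Es N * x = x -> (N <= M)%N ->
  Es M * x = x /\ forall i, Ps i M * x = Ps i N * x.
Proof.
move=> e NM; split.
  by rewrite -e mulrA /Es (sumF_mul (c := h) _ NM) // => i l; exact: hh.
move=> i; rewrite -[in LHS]e mulrA /Ps /Es (sumF_mul (c := fi i) _ NM) // => j l; exact: fi_h.
Qed.


Definition DW (W : R -> Prop) z := exists d w, [/\ D d, W w & z = d + w].

Lemma zornW : exists W : R -> Prop, [/\ W 0, (forall x y, W x -> W y -> W (x - y)),
   (forall x r, W x -> W (x * r)), (forall x, W x -> D x -> x = 0) &
   (forall x, x != 0 -> exists r, x * r != 0 /\ DW W (x * r))].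
Proof.
pose P := fun W : R -> Prop => [/\ (forall x y, W x -> W y -> W (x - y)),
   (forall x r, W x -> W (x * r)) & (forall x, W x -> D x -> x = 0)].
have := @classical_sets.Zorn_bigcup R P.
case.
  move=> F FP Ftot; split.
  - move=> x y [X FX Xx] [Y FY Yy].
    case: (Ftot X Y FX FY) => [XY|YX].
      by exists Y => //; have [PB _ _] := FP Y FY; apply: PB => //; apply: XY.
    by exists X => //; have [PB _ _] := FP X FX; apply: PB => //; apply: YX.
  - by move=> x r [X FX Xx]; exists X => //; have [_ PM _] := FP X FX; apply: PM.
  - by move=> x [X FX Xx]; have [_ _ PD] := FP X FX; apply: PD.
move=> A [[AB AM AD] Amax].
have A0 : A 0.
  apply: NNPP => nA0; apply: (Amax (fun x => x = 0)).
    split; first by move=> x Ax; exfalso; apply: nA0; rewrite -(subrr x); exact: AB.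
    by move/(_ 0 erefl).
  split; first by move=> x y -> ->; rewrite subrr.
    by move=> x r ->; rewrite mul0r.
  by move=> x ->.
exists A; split => // x xnz.
apply: NNPP => nex.
have H : forall r, DW A (x * r) -> x * r = 0.
  move=> r hr; apply: NNPP => nz; apply: nex; exists r; split => //; exact/eqP.
apply: (Amax (fun z => exists w r, A w /\ z = w + x * r)).
  split; first by move=> z Az; exists z, 0; rewrite mulr0 addr0.
  move=> sub; have Ax : A x by apply: sub; exists 0, 1; rewrite add0r mulr1.
  have D0 : D 0 by exists 0%N; rewrite mulr0.
  have := H 1; rewrite mulr1 => /(_ _) e; move/eqP: xnz; apply; apply: e.
  by exists 0, x; split => //; rewrite add0r.
split.
- move=> z z' [w [r [Aw ->]]] [w' [r' [Aw' ->]]]; exists (w - w'), (r - r'); split.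
    exact: AB.
  by rewrite mulrBr opprD addrACA.
- move=> z s [w [r [Aw ->]]]; exists (w * s), (r * s); split; first exact: AM.
  by rewrite mulrDl mulrA.
- move=> z [w [r [Aw ->]]] Dz.
  have Ew : A (- w) by rewrite -sub0r; exact: AB.
  have xr0 : x * r = 0.
    apply: H; exists (w + x * r), (- w); split => //.
    by rewrite addrC addKr.
  by rewrite xr0 addr0 in Dz *; apply: AD.
Qed.


Lemma Es_h j : Es j.+1 * h j = h j.
Proof. by rewrite /Es (sumF_mul1 (c := h)) ?ltnSn // => a b; exact: hh. Qed.

Lemma Ps_h i j : Ps i j.+1 * h j = fi i j.
Proof. by rewrite /Ps (sumF_mul1 (c := fi i)) ?ltnSn // => a b; exact: fi_h. Qed.

Lemma Es_Ps i N : Es N * Ps i N = Ps i N.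
Proof. by rewrite /Es /Ps (sumF_mul (c := fi i)) // => a b; exact: h_fi. Qed.

Lemma Ps_Ps l i N : Ps l N * Ps i N = if l == i then Ps i N else 0.
Proof.
rewrite /Ps (sumF_mul (c := fun j => if l == i then fi i j else 0)) // ?sumF_if //.
by move=> a b; rewrite fi_fi.
Qed.

Lemma main_false : False.
Proof.
have [W [W0 WB WM WD Wess]] := zornW.
have nonsing : forall z, (forall d w, D d -> W w -> z * (d + w) = 0) -> z = 0.
  move=> z hz; apply: NNPP => /eqP znz.
  have [u hu] := vN z.
  have uznz : u * z != 0 by apply: contraNneq znz => e; rewrite -hu -mulrA e mulr0.
  have [r [nz [d [w [Dd Ww e]]]]] := Wess _ uznz.
  have : z * r = 0 by rewrite -hu -!mulrA [u * (z * r)]mulrA e hz.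
  by move=> zr; move: nz; rewrite -mulrA zr mulr0 eqxx.
pose Phi1 i x z := exists d w N, [/\ Es N * d = d, W w, x = d + w & z = Ps i N * d].
have ext1 : forall i, exists y, forall x z, Phi1 i x z -> z = y * x.
  move=> i; apply: extend_lemma inj.
  - by exists 0, 0, 0%N; rewrite !mulr0 addr0.
  - move=> x z z' [d [w [N [Ed Ww -> ->]]]] [d' [w' [N' [Ed' Ww' e ->]]]].
    have [E1 P1] := D_up Ed (leq_maxl N N'); have [E2 P2] := D_up Ed' (leq_maxr N N').
    have dd : d - d' = 0.
      apply: WD.
        have -> : d - d' = w' - w by rewrite -[d](addrK w) e addrAC [d' + w']addrC addrK.
        exact: WB.
      by exists (maxn N N'); rewrite mulrBr E1 E2.
    move/eqP: dd; rewrite subr_eq0 => /eqP dd; by rewrite -P1 -P2 dd.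
  - move=> x y z z' [d [w [N [Ed Ww -> ->]]]] [d' [w' [N' [Ed' Ww' -> ->]]]].
    have [E1 P1] := D_up Ed (leq_maxl N N'); have [E2 P2] := D_up Ed' (leq_maxr N N').
    exists (d - d'), (w - w'), (maxn N N'); split.
    + by rewrite mulrBr E1 E2.
    + exact: WB.
    + by rewrite opprD addrACA.
    + by rewrite mulrBr P1 P2.
  - move=> x z r [d [w [N [Ed Ww -> ->]]]]; exists (d * r), (w * r), N; split.
    + by rewrite mulrA Ed.
    + exact: WM.
    + by rewrite mulrDl.
    + by rewrite mulrA.
have [a ha] : exists a : nat -> R, forall i x z, Phi1 i x z -> z = a i * x.
  exists (fun i => proj1_sig (constructive_indefinite_description _ (ext1 i))) => i.
  by case: constructive_indefinite_description.
have a_D : forall i N d w, Es N * d = d -> W w -> a i * (d + w) = Ps i N * d.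
  by move=> i N d w Ed Ww; apply/esym/ha; exists d, w, N.
have a_h : forall i j, a i * h j = fi i j.
  move=> i j; rewrite -Ps_h -(a_D i j.+1 (h j) 0) ?addr0 //; exact: Es_h.
have a_orth : forall l i, a l * a i = if l == i then a i else 0.
  move=> l i; apply/eqP; rewrite -subr_eq0; apply/eqP/nonsing => d w [N Ed] Ww.
  rewrite mulrBl -mulrA (a_D i N d w Ed Ww).
  have EP : Es N * (Ps i N * d) = Ps i N * d by rewrite mulrA Es_Ps.
  rewrite -[Ps i N * d]addr0 (a_D l N _ 0 EP W0) mulrA Ps_Ps.
  case: (eqVneq l i) => [e|ne]; first by rewrite (a_D i N d w Ed Ww) subrr.
  by rewrite !mul0r subrr.
have indep_vs : forall i js, uniq js -> (forall j, j \in js -> col j = i) ->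
    indep [seq h j * a i | j <- js].
  move=> i; elim => [|j js IH] //= /andP[jn ujs] cj; split; last first.
    by apply: IH => // j' j'in; apply: cj; rewrite inE j'in orbT.
  have fij : fi i j = h j by rewrite /fi cj ?inE ?eqxx.
  move=> sp; have := inspan_mul0 sp (w := h j).
  rewrite -mulrA a_h fij (hid j).1 => /(_ _) e; have [_ /eqP] := hid j; apply; apply: e.
  move=> v /mapP[j' j'in ->]; rewrite -mulrA a_h fij horth //.
  by apply: contraNneq jn => <-.
pose n_ i := (k * i * cs hB (a i)).+1.
have zex : forall i, exists z, z * a i = z /\ (n_ i <= cs hB z)%N.
  move=> i; set js := map (idx i) (iota 0 (n_ i)).
  have ujs : uniq js.
    rewrite /js map_inj_uniq ?iota_uniq // => l1 l2 /(pcan_inj pickleK).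
    by case.
  have cjs : forall j, j \in js -> col j = i by move=> j /mapP[l _ ->]; exact: col_idx.
  have [z [sz cz]] := big_cs hB (indep_vs i js ujs cjs).
  exists z; split.
    apply: inspan_fix sz _ => v /mapP[j _ ->]; by rewrite -mulrA a_orth eqxx.
  by move: cz; rewrite size_map /js size_map size_iota.
have [zf hzf] : exists zf : nat -> R, forall i, zf i * a i = zf i /\ (n_ i <= cs hB (zf i))%N.
  exists (fun i => proj1_sig (constructive_indefinite_description _ (zex i))) => i.
  by case: constructive_indefinite_description.
have za : forall i l, zf i * a l = if i == l then zf i else 0.
  move=> i l; rewrite -(hzf i).1 -mulrA a_orth.
  by case: eqP => [->|_]; rewrite ?(hzf l).1 ?mulr0.
have aa : forall i l, a i * a l = if i == l then a i else 0.
  by move=> i l; rewrite a_orth; case: eqP => [->|].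

have up2 : forall n m x, sumF a n * x = x -> (n <= m)%N ->
    sumF a m * x = x /\ sumF zf m * x = sumF zf n * x.
  move=> n m x e nm; split.
    by rewrite -[in LHS]e mulrA (sumF_mul aa nm).
  by rewrite -[in LHS]e mulrA (sumF_mul za nm).
pose Phi2 x z := exists n, sumF a n * x = x /\ z = sumF zf n * x.
have [y hy] : exists y, forall x z, Phi2 x z -> z = y * x.
  apply: extend_lemma inj.
  - by exists 0%N; rewrite !mulr0.
  - move=> x z z' [n [en ->]] [m [em ->]].
    have [_ P1] := up2 _ _ _ en (leq_maxl n m); have [_ P2] := up2 _ _ _ em (leq_maxr n m).
    by rewrite -P1 -P2.
  - move=> x x' z z' [n [en ->]] [m [em ->]].
    have [E1 P1] := up2 _ _ _ en (leq_maxl n m); have [E2 P2] := up2 _ _ _ em (leq_maxr n m).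
    exists (maxn n m); split; first by rewrite mulrBr E1 E2.
    by rewrite mulrBr P1 P2.
  - move=> x z r [n [en ->]]; exists n; split; first by rewrite mulrA en.
    by rewrite mulrA.
have yai : forall i, y * a i = zf i.
  move=> i; apply/esym/hy; exists i.+1; split.
    by rewrite (sumF_mul1 aa) ltnSn.
  by rewrite (sumF_mul1 za) ltnSn.
set i := cs hB y.
have := cs_mul hB hk y (a i); rewrite yai.
have := (hzf i).2; rewrite /n_ /i.
lia.
Qed.

End Main.


Theorem lemma5p4 (K : fieldType) (R : algType K) :
  vN_regular R -> right_self_injective R ->
  (exists B : R -> Prop, bounded_basis B) ->
  completely_reducible R.
Proof.
move=> vN inj [B [hB [k hk]]].
apply: NNPP => ncr.
have [h [hid horth]] := orth_seq vN ncr.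
exact: (main_false vN inj hB hk hid horth).
Qed.
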